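(* Let $j\ge 2$ be an integer and let $\bar\alpha_j$ be the largest $\alpha\ge 0$ such that $\left(1-e^{-\alpha^{j-1}x^{j-1}}\right)^{j-1}\le x$ for all $x\in(0,1]$. For $\alpha>0$ and an integer $k\ge 2$ with $\delta:=\alpha(k-1)^{-j/(j-1)}\le 1$, define the sequence $x_0=\delta$ and $$x_{i+1}=\delta\left(1-\Bigl[1-(1-\delta)\bigl(1-(1-x_i)^{k-1}\bigr)^{j-1}-x_i\Bigr]^{k-1}\right)^{j-1},\quad i\ge 0.$$ (a) If $\alpha<\bar\alpha_j$, there exists $K_1<\infty$ such that for all $k\ge K_1$, $x_i\to 0$ as $i\to\infty$. (b) If $\alpha>\bar\alpha_j$, there exists $K_2<\infty$ such that for all $k\ge K_2$, $x_i$ does not converge to $0$.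
   Context: The recursion is the density evolution of the LM1 verification-decoding algorithm (Luby–Mitzenmacher) for a $(j,k)$-regular LDPC code on the $q$-ary symmetric channel with error probability $\delta$ (equivalently, LM1 reconstruction of a strictly sparse signal whose fraction of nonzero entries is $\delta$); $x_i$ is the fraction of unverified messages after $i$ iterations, and $x_i\to0$ corresponds to successful decoding/reconstruction with high probability as the block length tends to infinity. *)

(* Defs.v *)
From Stdlib Require Import Reals.
Open Scope R_scope.

Definition admissible (j : nat) (alpha : R) : Prop :=
  0 <= alpha /\
  forall x : R, 0 < x <= 1 ->
    (1 - exp (- (alpha ^ (j - 1) * x ^ (j - 1)))) ^ (j - 1) <= x.

Definition is_alpha_bar (j : nat) (abar : R) : Prop :=
  admissible j abar /\ forall alpha, admissible j alpha -> alpha <= abar.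

Definition lm1_delta (j k : nat) (alpha : R) : R :=
  alpha * Rpower (INR (k - 1)) (- (INR j / INR (j - 1))).

Fixpoint lm1_seq (j k : nat) (delta : R) (i : nat) : R :=
  match i with
  | O => delta
  | S i' =>
      let x := lm1_seq j k delta i' in
      delta * (1 - (1 - (1 - delta) * (1 - (1 - x) ^ (k - 1)) ^ (j - 1) - x)
                     ^ (k - 1)) ^ (j - 1)
  end.

(* Main.v *)
Require Import Defs.
From Stdlib Require Import Reals Lra Lia Psatz Classical.
Open Scope R_scope.

Lemma exp_le' : forall a b, a <= b -> exp a <= exp b.
Proof. intros a b H. destruct (Rle_lt_or_eq _ _ H) as [H1|H1].
 left; now apply exp_increasing. subst; lra. Qed.

Lemma bern : forall m t, -1 <= t -> 1 + INR m * t <= (1+t)^m.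
Proof. induction m; intros t Ht. simpl; lra.
 rewrite S_INR. change ((1+t)^S m) with ((1+t)*(1+t)^m). specialize (IHm t Ht).
 assert (0 <= INR m) by apply pos_INR. nra. Qed.

Lemma pow_exp : forall m a, exp a ^ m = exp (INR m * a).
Proof. induction m; intros a. simpl. rewrite Rmult_0_l, exp_0; ring.
 change (exp a ^ S m) with (exp a * exp a ^ m). rewrite IHm, S_INR. replace ((INR m + 1) * a) with (a + INR m * a) by ring.
 rewrite exp_plus; ring. Qed.

Lemma pow_le1 : forall m x, 0 <= x <= 1 -> 0 <= x^m <= 1.
Proof. induction m; intros x Hx; simpl. lra. specialize (IHm x Hx). nra. Qed.

Lemma pow_le_self : forall n e, (1 <= n)%nat -> 0 <= e <= 1 -> e^n <= e.
Proof. intros n e Hn He. destruct n. lia. simpl.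
 destruct (pow_le1 n e He). nra. Qed.

Lemma pow_lt' : forall n x y, (1 <= n)%nat -> 0 <= x < y -> x^n < y^n.
Proof. induction n; intros x y Hn H. lia. destruct n. simpl; lra.
 assert (x^S n < y^S n) by (apply IHn; [lia|lra]).
 change (x * x^S n < y * y^S n).
 assert (0 <= x^S n) by (apply pow_le; lra). nra. Qed.

Lemma sumpow : forall n q b, 0 <= q -> 0 <= b -> q + b <= 2 ->
  (q+b)^n <= q^n + INR n * b * 2^n.
Proof. induction n; intros q b Hq Hb H2. simpl; lra.
 rewrite S_INR. change ((q+b)^S n) with ((q+b)*(q+b)^n). change (q^S n) with (q*q^n).
 change (2^S n) with (2*2^n). specialize (IHn q b Hq Hb H2).
 assert (q^n <= 2^n) by (apply pow_incr; lra).
 assert (0 <= q^n) by (apply pow_le; lra).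
 assert (0 <= INR n) by apply pos_INR.
 assert (0 <= 2^n) by (apply pow_le; lra).
 assert (0 <= INR n * b * 2^n) by (apply Rmult_le_pos; [apply Rmult_le_pos|];lra).
 assert ((q+b)*(q+b)^n <= (q+b)*(q^n + INR n * b * 2^n)) by
  (apply Rmult_le_compat_l; lra).
 assert (q*(INR n * b * 2^n) + b * (INR n * b * 2^n) <= 2 * (INR n * b * 2^n)) by nra.
 nra. Qed.

Lemma exp_low : forall t, 0 <= t < 1 -> exp (- (t/(1-t))) <= 1 - t.
Proof. intros t Ht. rewrite exp_Ropp.
 assert (H := exp_ineq1_le (t/(1-t))).
 assert (1 + t/(1-t) = /(1-t)) by (field; lra).
 replace (1-t) with (/ / (1-t)) at 2 by (field; lra).
 apply Rinv_le_contravar. apply Rinv_0_lt_compat; lra. lra. Qed.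

Lemma one_minus_pow : forall m x, 0 <= x <= 1 -> (1-x)^m * (1 + INR m * x) <= 1.
Proof. intros m x Hx.
 assert (H := bern m x ltac:(lra)).
 assert (0 <= (1-x)^m) by (apply pow_le; lra).
 assert ((1-x)^m * (1+x)^m <= 1).
 { rewrite <- Rpow_mult_distr. apply pow_le1. nra. }
 nra. Qed.

Lemma one_pm : forall n e, 0 <= e <= 1 -> (1-e)^n * (1+e)^n <= 1.
Proof. intros. rewrite <- Rpow_mult_distr. apply pow_le1. nra. Qed.

Definition Bf (n m : nat) (d x : R) := 1 - (1 - d) * (1 - (1 - x) ^ m) ^ n - x.

Lemma P_bounds : forall m x, 0 <= x <= 1 ->
  0 <= 1 - (1-x)^m <= INR m * x /\ INR m * x <= (1 - (1-x)^m) * (1 + INR m * x).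
Proof. intros m x Hx.
 assert (H1 := bern m (-x) ltac:(lra)).
 replace (1 + - x) with (1-x) in H1 by ring.
 assert (H2 := pow_le1 m (1-x) ltac:(lra)).
 assert (H3 := one_minus_pow m x Hx).
 assert (0 <= INR m) by apply pos_INR.
 repeat split; nra. Qed.

Lemma B_bounds : forall n m d x, 0 <= d <= 1 -> 0 <= x <= 1 ->
  (INR m * x)^n + x <= 1 ->
  1 - ((INR m * x)^n + x) <= Bf n m d x /\
  Bf n m d x <= 1 - (1-d) * (1 - (1-x)^m)^n /\ 0 <= Bf n m d x <= 1.
Proof. intros n m d x Hd Hx Ht. unfold Bf.
 destruct (P_bounds m x Hx) as [[HP1 HP2] _].
 assert (Hq : (1 - (1-x)^m)^n <= (INR m * x)^n) by (apply pow_incr; lra).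
 assert (0 <= (1 - (1-x)^m)^n) by (apply pow_le; lra).
 repeat split; nra. Qed.

Lemma step_a : forall n m al abar sa eps v,
 (1 <= n)%nat -> 0 < al -> 0 < eps -> INR m * eps^n = 1 -> eps <= 1 ->
 (forall y, 0 < y <= 1 -> (1 - exp (- (abar^n * y^n)))^n <= y) ->
 0 < sa < abar ->
 al*eps <= 1/4 -> al^n <= (1 - 2*(al*eps)) * sa^n ->
 2 * INR n * 2^n * (al*eps) <= (1 - sa/abar)/2 ->
 0 <= v <= 1 ->
 0 <= (1 - (Bf n m (al*eps^(S n)) (al*eps^(S n)*v))^m)^n <= ((1+sa/abar)/2) * v.
Proof.
 intros n m al abar sa eps v Hn Hal Heps Hm Heps1 Hadm Hsa He4 Hsan Hsmall Hv.
 set (e := al*eps) in *.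
 assert (Hen : 0 <= eps^n <= 1) by (apply pow_le1; lra).
 set (d := al*eps^(S n)).
 assert (Hd : d = e*eps^n) by (unfold d, e; simpl; ring).
 assert (He0 : 0 < e) by (unfold e; nra).
 assert (Hd0 : 0 <= d <= e) by nra.
 set (x := d*v).
 assert (Hx : 0 <= x <= d) by (unfold x; nra).
 assert (Hmx : INR m * x = e*v).
 { unfold x; rewrite Hd. replace (INR m * (e*eps^n*v)) with (e*v*(INR m*eps^n)) by ring.
   rewrite Hm; ring. }
 assert (Hmt : INR m * (e*v)^n = al^n * v^n).
 { unfold e. rewrite !Rpow_mult_distr.
   replace (INR m * (al^n*eps^n*v^n)) with (al^n*v^n*(INR m*eps^n)) by ring.
   rewrite Hm; ring. }
 assert (He1 : e^n <= e) by (apply pow_le_self; [lia|lra]).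
 assert (Hev : (e*v)^n <= e^n) by (apply pow_incr; split; nra).
 assert (Hev0 : 0 <= (e*v)^n) by (apply pow_le; nra).
 set (t := (e*v)^n + x).
 assert (Ht : 0 <= t <= 2*e) by (unfold t; lra).
 destruct (B_bounds n m d x ltac:(lra) ltac:(lra) ltac:(rewrite Hmx; lra)) as [HB1 [HB2 HB3]].
 rewrite Hmx in HB1. fold t in HB1.
 set (B := Bf n m d x) in *.
 assert (HBm : (1-t)^m <= B^m) by (apply pow_incr; lra).
 assert (Hel := exp_low t ltac:(lra)).
 assert (Hel2 : exp (- (t/(1-t)))^m <= (1-t)^m) by (apply pow_incr; split; [left; apply exp_pos| lra]).
 rewrite pow_exp in Hel2.
 set (a := al^n * v^n / (1 - 2*e)).
 set (b := e*v / (1-2*e)).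
 assert (Hmt2 : INR m * t = al^n*v^n + e*v).
 { unfold t. rewrite Rmult_plus_distr_l, Hmt, Hmx. ring. }
 assert (Hinv : 0 < / (1-t) <= / (1 - 2*e)).
 { split. apply Rinv_0_lt_compat; lra. apply Rinv_le_contravar; lra. }
 assert (Hmt0 : 0 <= INR m * t) by (rewrite Hmt2; assert (0 <= v^n) by (apply pow_le; lra); assert (0 <= al^n) by (apply pow_le; lra); nra).
 assert (Hab : INR m * - (t/(1-t)) >= - (a + b)).
 { unfold a, b. replace (- ((al^n*v^n/(1-2*e)) + e*v/(1-2*e))) with (- ((INR m * t) * /(1-2*e)))
    by (rewrite Hmt2; field; lra).
   unfold Rdiv. replace (INR m * - (t * /(1-t))) with (- ((INR m * t) * /(1-t))) by ring.
   nra. }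
 assert (HexpB : exp (- (a+b)) <= B^m).
 { apply Rle_trans with (exp (INR m * - (t/(1-t)))). apply exp_le'; lra. lra. }
 assert (Hinv2 : 0 < / (1-2*e) <= 2).
 { split. apply Rinv_0_lt_compat; lra. replace 2 with (/ / 2) by (field).
   apply Rinv_le_contravar; lra. }
 assert (Hvn : 0 <= v^n <= 1) by (apply pow_le1; lra).
 assert (Ha0 : 0 <= a) by (unfold a, Rdiv; assert (0 <= al^n) by (apply pow_le; lra); apply Rmult_le_pos; [apply Rmult_le_pos|]; lra).
 assert (Hb : 0 <= b <= 2*e*v) by (unfold b, Rdiv; assert (0 <= e*v) by nra; split; nra).
 assert (Hasa : a <= sa^n * v^n).
 { unfold a, Rdiv.
   assert (H1 : al^n*v^n <= (1-2*e)*sa^n*v^n) by nra.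
   assert (H2 : (1-2*e) * /(1-2*e) = 1) by (field; lra).
   nra. }
 assert (Hea : exp (-a) <= 1) by (rewrite <- exp_0; apply exp_le'; lra).
 assert (Heb := exp_ineq1_le (-b)).
 assert (Hea0 := exp_pos (-a)).
 assert (Hexp_ab : exp (-(a+b)) = exp (-a) * exp (-b)) by (rewrite <- exp_plus; f_equal; ring).
 set (q := 1 - exp (- (sa^n * v^n))).
 assert (Hq : exp (- (sa^n*v^n)) <= exp (-a)) by (apply exp_le'; lra).
 assert (Hq0 : 0 <= q <= 1).
 { unfold q. assert (H0 := exp_pos (- (sa^n*v^n))).
   assert (0 <= sa^n) by (apply pow_le; lra).
   assert (exp (- (sa^n*v^n)) <= 1) by (rewrite <- exp_0; apply exp_le'; nra). lra. }
 assert (Hqn : q^n <= sa/abar * v).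
 { destruct (Rle_lt_or_eq _ _ (proj1 Hv)) as [Hv0|Hv0].
   - assert (Hr : 0 < sa/abar < 1).
     { split. apply Rdiv_lt_0_compat; lra. apply (Rmult_lt_reg_r abar). lra.
       unfold Rdiv; rewrite Rmult_assoc, Rinv_l; lra. }
     assert (Hy := Hadm (sa/abar*v) ltac:(split; nra)).
     replace (abar^n * (sa/abar*v)^n) with (sa^n*v^n) in Hy. exact Hy.
     rewrite <- Rpow_mult_distr. rewrite <- Rpow_mult_distr. f_equal. field. lra.
   - subst v. unfold q. rewrite (pow_i n) by lia. rewrite Rmult_0_r, Ropp_0, exp_0.
     replace (1-1) with 0 by ring. rewrite pow_i by lia. lra. }
 set (X := 1 - B^m).
 assert (HBm1 : 0 <= B^m <= 1) by (apply pow_le1; lra).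
 assert (HX : 0 <= X <= q + b).
 { unfold X. split. lra.
   assert (exp (-a) * exp(-b) >= exp (-a) * (1 - b)) by nra.
   unfold q. nra. }
 assert (HXn : X^n <= (q+b)^n) by (apply pow_incr; lra).
 assert (Hsum := sumpow n q b ltac:(lra) ltac:(lra) ltac:(nra)).
 assert (H2n : 0 <= INR n * 2^n).
 { apply Rmult_le_pos. apply pos_INR. apply pow_le; lra. }
 assert (INR n * b * 2^n <= INR n * 2^n * (2*e*v)) by nra.
 split. apply pow_le; lra.
 assert (2 * INR n * 2^n * e * v <= (1 - sa/abar)/2 * v) by nra.
 nra.
Qed.

Lemma step_b : forall n m al al' eps y0 v,
 (1 <= n)%nat -> 0 < al -> 0 < eps -> INR m * eps^n = 1 -> eps <= 1 -> 0 <= al' ->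
 al*eps <= 1/4 -> INR (S n) * (al*eps) * al^n <= al^n - al'^n ->
 0 < y0 -> y0 < (1 - exp (- (al'^n * y0^n)))^n -> y0 <= v <= 1 ->
 y0 <= (1 - (Bf n m (al*eps^(S n)) (al*eps^(S n)*v))^m)^n <= 1.
Proof.
 intros n m al al' eps y0 v Hn Hal Heps Hm Heps1 Hal' He4 Hcond Hy0 Hy0g Hv.
 set (e := al*eps) in *.
 assert (Hen : 0 <= eps^n <= 1) by (apply pow_le1; lra).
 set (d := al*eps^(S n)).
 assert (Hd : d = e*eps^n) by (unfold d, e; simpl; ring).
 assert (He0 : 0 < e) by (unfold e; nra).
 assert (Hd0 : 0 <= d <= e) by nra.
 set (x := d*v).
 assert (Hx : 0 <= x <= d) by (unfold x; nra).
 assert (Hmx : INR m * x = e*v).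
 { unfold x; rewrite Hd. replace (INR m * (e*eps^n*v)) with (e*v*(INR m*eps^n)) by ring.
   rewrite Hm; ring. }
 assert (Hmt : INR m * (e*v)^n = al^n * v^n).
 { unfold e. rewrite !Rpow_mult_distr.
   replace (INR m * (al^n*eps^n*v^n)) with (al^n*v^n*(INR m*eps^n)) by ring.
   rewrite Hm; ring. }
 assert (He1 : e^n <= e) by (apply pow_le_self; [lia|lra]).
 assert (Hev : (e*v)^n <= e^n) by (apply pow_incr; split; nra).
 assert (Hev0 : 0 <= (e*v)^n) by (apply pow_le; nra).
 destruct (B_bounds n m d x ltac:(lra) ltac:(lra) ltac:(rewrite Hmx; lra)) as [HB1 [HB2 HB3]].
 set (B := Bf n m d x) in *.
 destruct (P_bounds m x ltac:(lra)) as [[HP0 HP1] HP2].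
 rewrite Hmx in HP1, HP2.
 set (P := 1 - (1-x)^m) in *.
 assert (HPe : e*v <= P*(1+e)) by nra.
 assert (HPn : (e*v)^n <= P^n * (1+e)^n).
 { rewrite <- Rpow_mult_distr. apply pow_incr. split; nra. }
 assert (Hpm := one_pm n e ltac:(lra)).
 assert (H1e : 0 <= (1-e)^n) by (apply pow_le; lra).
 assert (H1e' : 0 <= (1+e)^n) by (apply pow_le; lra).
 assert (HPn0 : 0 <= P^n) by (apply pow_le; lra).
 assert (HPn2 : (e*v)^n * (1-e)^n <= P^n).
 { apply Rle_trans with (P^n * (1+e)^n * (1-e)^n). nra.
   assert (P^n * ((1-e)^n*(1+e)^n) <= P^n * 1) by (apply Rmult_le_compat_l; lra). nra. }
 assert (Hm0 : 0 <= INR m) by apply pos_INR.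
 assert (HmP : al^n * v^n * (1-e)^n <= INR m * P^n).
 { rewrite <- Hmt. replace (INR m * (e*v)^n * (1-e)^n) with (INR m * ((e*v)^n * (1-e)^n)) by ring.
   apply Rmult_le_compat_l; lra. }
 set (u := (1-d) * P^n).
 assert (Hvn : 0 <= v^n) by (apply pow_le; lra).
 assert (Haln : 0 <= al^n) by (apply pow_le; lra).
 assert (Hb := bern (S n) (-e) ltac:(lra)).
 replace (1 + - e) with (1-e) in Hb by ring.
 change ((1-e)^S n) with ((1-e)*(1-e)^n) in Hb.
 assert (Hmu : (1-e)*(1-e)^n * (al^n*v^n) <= INR m * u).
 { unfold u. replace (INR m * ((1-d)*P^n)) with ((1-d) * (INR m * P^n)) by ring.
   assert ((1-e) * (al^n * v^n * (1-e)^n) <= (1-d) * (al^n*v^n*(1-e)^n)).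
   { apply Rmult_le_compat_r. assert (0 <= al^n*v^n) by nra. nra. lra. }
   assert ((1-d) * (al^n*v^n*(1-e)^n) <= (1-d) * (INR m * P^n)) by (apply Rmult_le_compat_l; lra).
   nra. }
 assert (Hmu2 : al'^n * v^n <= INR m * u).
 { assert ((1 + INR (S n) * - e) * (al^n*v^n) <= (1-e)*(1-e)^n * (al^n*v^n)) by
     (apply Rmult_le_compat_r; nra).
   assert (INR (S n) * e * al^n * v^n <= (al^n - al'^n) * v^n) by (apply Rmult_le_compat_r; lra).
   nra. }
 assert (Hy0n : al'^n * y0^n <= al'^n * v^n).
 { apply Rmult_le_compat_l. apply pow_le; lra. apply pow_incr; lra. }
 assert (Hu : 0 <= 1 - u) by (unfold u; lra).
 assert (HBu : B^m <= (1-u)^m) by (apply pow_incr; unfold u; lra).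
 assert (Heu : (1-u)^m <= exp (-u)^m).
 { apply pow_incr. split. lra. assert (H := exp_ineq1_le (-u)). lra. }
 rewrite pow_exp in Heu.
 assert (Hexp : exp (INR m * - u) <= exp (- (al'^n*y0^n))) by (apply exp_le'; lra).
 assert (HBm1 : 0 <= B^m <= 1) by (apply pow_le1; lra).
 set (r := 1 - exp (- (al'^n*y0^n))) in *.
 assert (Hr0 : 0 <= r).
 { unfold r. assert (0 <= al'^n * y0^n) by
     (apply Rmult_le_pos; apply pow_le; lra).
   assert (exp (- (al'^n*y0^n)) <= 1) by (rewrite <- exp_0; apply exp_le'; lra). lra. }
 split.
 - assert (r^n <= (1 - B^m)^n) by (apply pow_incr; unfold r in *; lra). lra.
 - apply pow_le1; lra.
Qed.

Lemma seq_S : forall n m d i, lm1_seq (S n) (S m) d (S i) =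
  d * (1 - (Bf n m d (lm1_seq (S n) (S m) d i))^m)^n.
Proof. intros. simpl lm1_seq. unfold Bf. rewrite !Nat.sub_0_r. reflexivity. Qed.

Definition epsf (n m : nat) := Rpower (INR m) (-1 / INR n).

Lemma eps_facts : forall n m al, (1 <= n)%nat -> (1 <= m)%nat ->
  0 < epsf n m /\ INR m * (epsf n m)^n = 1 /\ epsf n m <= 1 /\
  lm1_delta (S n) (S m) al = al * (epsf n m)^(S n).
Proof. intros n m al Hn Hm.
 assert (Hn0 : 0 < INR n) by (apply lt_0_INR; lia).
 assert (Hm0 : 1 <= INR m) by (apply (le_INR 1); lia).
 assert (He : 0 < epsf n m) by (unfold epsf, Rpower; apply exp_pos).
 assert (Hpow : INR m * (epsf n m)^n = 1).
 { rewrite <- Rpower_pow by exact He. unfold epsf. rewrite Rpower_mult.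
   replace (-1 / INR n * INR n) with (- (1)) by (field; lra).
   rewrite Rpower_Ropp, Rpower_1 by lra. field. lra. }
 split; [exact He|]. split; [exact Hpow|]. split.
 - destruct (Rle_or_lt (epsf n m) 1) as [H|H]; [exact H|].
   assert (epsf n m ^ 1 <= epsf n m ^ n) by (apply Rle_pow; [lra|lia]).
   simpl in H0. nra.
 - unfold lm1_delta. f_equal.
   replace (INR (S m - 1)) with (INR m) by (f_equal; lia).
   rewrite <- Rpower_pow by exact He. unfold epsf. rewrite Rpower_mult.
   f_equal. replace (S n - 1)%nat with n by lia. field. lra.
Qed.

Lemma eps_small : forall n m eps al eta, (1 <= n)%nat -> 0 < eps -> 0 < al -> 0 < eta ->
  INR m * eps^n = 1 -> INR m * eta^n > al^n -> al * eps < eta.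
Proof. intros n m eps al eta Hn He Hal Het Hm Hbig.
 destruct (Rlt_or_le (al*eps) eta) as [H|H]; [exact H|].
 assert (eta^n <= (al*eps)^n) by (apply pow_incr; lra).
 rewrite Rpow_mult_distr in H0.
 assert (0 <= INR m) by apply pos_INR.
 assert (INR m * eta^n <= INR m * (al^n * eps^n)) by (apply Rmult_le_compat_l; lra).
 replace (INR m * (al^n*eps^n)) with (al^n * (INR m * eps^n)) in H2 by ring.
 rewrite Hm in H2. lra. Qed.

Lemma le_div : forall e c D, 0 < D -> e <= c / D -> e * D <= c.
Proof. intros e c D HD H. apply Rmult_le_compat_r with (r:=D) in H; [|lra].
 replace (c/D*D) with c in H by (field; lra). exact H. Qed.

Theorem theorem3 (j : nat) (abar : R) :
  (2 <= j)%nat ->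
  is_alpha_bar j abar ->
  (forall alpha : R, 0 < alpha -> alpha < abar ->
     exists K1 : nat, forall k : nat, (K1 <= k)%nat -> (2 <= k)%nat ->
       lm1_delta j k alpha <= 1 ->
       Un_cv (lm1_seq j k (lm1_delta j k alpha)) 0) /\
  (forall alpha : R, abar < alpha ->
     exists K2 : nat, forall k : nat, (K2 <= k)%nat -> (2 <= k)%nat ->
       lm1_delta j k alpha <= 1 ->
       ~ Un_cv (lm1_seq j k (lm1_delta j k alpha)) 0).
Proof.
 intros Hj [[Hab0 Hadm] Hmax].
 destruct j as [|n]; [lia|].
 assert (Hn : (1 <= n)%nat) by lia.
 replace (S n - 1)%nat with n in Hadm by lia.
 assert (Hn0 : 0 < INR n) by (apply lt_0_INR; lia).
 assert (H2n : 0 < 2^n) by (apply pow_lt; lra).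
 split.
 - intros al Hal Hlt.
   set (sa := (al + abar)/2).
   assert (Hsa : 0 < sa < abar) by (unfold sa; lra).
   assert (Hr : sa/abar < 1).
   { apply (Rmult_lt_reg_r abar). lra. unfold Rdiv; rewrite Rmult_assoc, Rinv_l; lra. }
   assert (Hr0 : 0 < sa/abar) by (apply Rdiv_lt_0_compat; lra).
   assert (Hsan : al^n < sa^n) by (apply pow_lt'; [lia|unfold sa; lra]).
   assert (Hsan0 : 0 < sa^n) by (apply pow_lt; lra).
   set (eta := Rmin (1/4) (Rmin ((sa^n - al^n)/(2*sa^n)) ((1 - sa/abar)/(4*INR n*2^n)))).
   assert (Heta : 0 < eta).
   { unfold eta. apply Rmin_pos. lra. assert (0 < 4*INR n*2^n) by (apply Rmult_lt_0_compat; [apply Rmult_lt_0_compat|]; lra). apply Rmin_pos; apply Rdiv_lt_0_compat; lra. }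
   assert (Heta1 : eta <= 1/4) by apply Rmin_l.
   assert (Heta2 : eta <= (sa^n - al^n)/(2*sa^n)) by
     (eapply Rle_trans; [apply Rmin_r| apply Rmin_l]).
   assert (Heta3 : eta <= (1 - sa/abar)/(4*INR n*2^n)) by
     (eapply Rle_trans; [apply Rmin_r| apply Rmin_r]).
   destruct (INR_archimed (eta^n) (al^n) ltac:(apply pow_lt; lra)) as [N HN].
   exists (N+2)%nat. intros k Hk Hk2 Hdelta.
   destruct k as [|m]; [lia|].
   assert (Hm : (1 <= m)%nat) by lia.
   destruct (eps_facts n m al Hn Hm) as [He0 [Hpow [He1 Hdel]]].
   set (eps := epsf n m) in *.
   assert (HmN : INR m * eta^n > al^n).
   { assert (INR N <= INR m) by (apply le_INR; lia).
     assert (0 <= eta^n) by (apply pow_le; lra). nra. }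
   assert (Hsm := eps_small n m eps al eta Hn He0 Hal Heta Hpow HmN).
   rewrite Hdel in *.
   set (rho := (1 + sa/abar)/2).
   assert (Hrho : 0 < rho < 1) by (unfold rho; lra).
   assert (Hc1 : al^n <= (1 - 2*(al*eps)) * sa^n).
   { assert (al*eps * (2*sa^n) <= sa^n - al^n) by (apply le_div; lra). nra. }
   assert (Hc2 : 2 * INR n * 2^n * (al*eps) <= (1 - sa/abar)/2).
   { assert (al*eps * (4*INR n*2^n) <= 1 - sa/abar) by (apply le_div; [nra|lra]). nra. }
   set (d := al * eps^(S n)) in *.
   assert (Hd0 : 0 <= d) by (unfold d; apply Rmult_le_pos; [lra|apply pow_le; lra]).
   assert (Hclaim : forall i, exists v, 0 <= v <= rho^i /\ lm1_seq (S n) (S m) d i = d * v).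
   { induction i.
     - exists 1. simpl. split. lra. ring.
     - destruct IHi as [v [Hv Hx]].
       assert (rho^i <= 1) by (apply pow_le1; lra).
       assert (Hst := step_a n m al abar sa eps v Hn Hal He0 Hpow He1 Hadm Hsa
                       ltac:(lra) Hc1 Hc2 ltac:(lra)).
       exists ((1 - (Bf n m d (d*v))^m)^n). rewrite seq_S, Hx. split; [|reflexivity].
       fold rho in Hst. fold d in Hst. simpl. split. lra. nra. }
   intros eps0 Heps0.
   destruct (pow_lt_1_zero rho ltac:(rewrite Rabs_right; lra) eps0 Heps0) as [N0 HN0].
   exists N0. intros i Hi. unfold Rdist.
   destruct (Hclaim i) as [v [Hv Hx]]. rewrite Hx.
   specialize (HN0 i Hi). rewrite Rabs_right in HN0 by (apply Rle_ge, pow_le; lra).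
   rewrite Rminus_0_r, Rabs_right by nra. nra.
 - intros al Hal.
   set (al' := (al + abar)/2).
   assert (Hal0 : 0 < al) by lra.
   assert (Hna : ~ admissible (S n) al').
   { intro H. specialize (Hmax al' H). unfold al' in Hmax. lra. }
   unfold admissible in Hna. replace (S n - 1)%nat with n in Hna by lia.
   assert (Hex : exists y, ~ (0 < y <= 1 -> (1 - exp (- (al'^n * y^n)))^n <= y)).
   { apply not_all_ex_not. intro H. apply Hna. split. unfold al'; lra. exact H. }
   destruct Hex as [y0 Hy0]. apply imply_to_and in Hy0. destruct Hy0 as [Hy0 Hy0'].
   apply Rnot_le_lt in Hy0'.
   assert (Hsan : al'^n < al^n) by (apply pow_lt'; [lia|unfold al'; lra]).
   assert (Haln : 0 < al^n) by (apply pow_lt; lra).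
   assert (HSn : 0 < INR (S n)) by (apply lt_0_INR; lia).
   set (eta := Rmin (1/4) ((al^n - al'^n)/(INR (S n) * al^n))).
   assert (Heta : 0 < eta).
   { unfold eta. apply Rmin_pos. lra. apply Rdiv_lt_0_compat; nra. }
   assert (Heta1 : eta <= 1/4) by apply Rmin_l.
   assert (Heta2 : eta <= (al^n - al'^n)/(INR (S n) * al^n)) by apply Rmin_r.
   destruct (INR_archimed (eta^n) (al^n) ltac:(apply pow_lt; lra)) as [N HN].
   exists (N+2)%nat. intros k Hk Hk2 Hdelta.
   destruct k as [|m]; [lia|].
   assert (Hm : (1 <= m)%nat) by lia.
   destruct (eps_facts n m al Hn Hm) as [He0 [Hpow [He1 Hdel]]].
   set (eps := epsf n m) in *.
   assert (HmN : INR m * eta^n > al^n).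
   { assert (INR N <= INR m) by (apply le_INR; lia).
     assert (0 <= eta^n) by (apply pow_le; lra). nra. }
   assert (Hsm := eps_small n m eps al eta Hn He0 Hal0 Heta Hpow HmN).
   rewrite Hdel in *.
   assert (Hc : INR (S n) * (al*eps) * al^n <= al^n - al'^n).
   { assert (al*eps * (INR (S n) * al^n) <= al^n - al'^n) by (apply le_div; [nra|lra]). nra. }
   set (d := al * eps^(S n)) in *.
   assert (Hd0 : 0 < d) by (unfold d; apply Rmult_lt_0_compat; [lra|apply pow_lt; lra]).
   assert (Hclaim : forall i, exists v, y0 <= v <= 1 /\ lm1_seq (S n) (S m) d i = d * v).
   { induction i.
     - exists 1. simpl. split. lra. ring.
     - destruct IHi as [v [Hv Hx]].
       assert (Hst := step_b n m al al' eps y0 v Hn Hal0 He0 Hpow He1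
                       ltac:(unfold al'; lra) ltac:(lra) Hc ltac:(lra) Hy0' Hv).
       exists ((1 - (Bf n m d (d*v))^m)^n). rewrite seq_S, Hx. split; [|reflexivity].
       fold d in Hst. exact Hst. }
   intro Hcv.
   destruct (Hcv (d*y0) ltac:(nra)) as [N0 HN0].
   specialize (HN0 N0 (le_n _)). unfold Rdist in HN0.
   destruct (Hclaim N0) as [v [Hv Hx]]. rewrite Hx in HN0.
   rewrite Rminus_0_r, Rabs_right in HN0 by nra. nra.
Qed.
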